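(* Let $(\mathscr{C},\otimes,I)$ be a monoidal category with finite limits and countable colimits such that for every object $C$ the functors $-\otimes C$ and $C\otimes-$ preserve reflexive coequalizers and colimits of countable chains. If $q:B\to C$ and $q':B\to C'$ are regular epimorphisms in $\mathscr{C}$, then their cointersection, i.e. the pushout square $r\circ q=r'\circ q'$ with $r:C\to D$, $r':C'\to D$, is preserved by tensoring on either side: for every object $E$, the squares obtained by applying $E\otimes-$ and $-\otimes E$ are again pushouts.
   Context: A regular epimorphism is a morphism which is the coequalizer of some pair of parallel morphisms. A pair of parallel morphisms is reflexive if it has a common section. *)

(* Defs.v *)
From Stdlib Require Import List.

Record Category := {
  ob :> Type;
  hom : ob -> ob -> Type;
  comp : forall a b c : ob, hom b c -> hom a b -> hom a c;
  idm : forall a : ob, hom a a;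
  comp_id_l : forall a b (f : hom a b), comp a b b (idm b) f = f;
  comp_id_r : forall a b (f : hom a b), comp a a b f (idm a) = f;
  comp_assoc : forall a b c d (f : hom c d) (g : hom b c) (h : hom a b),
      comp a c d f (comp a b c g h) = comp a b d (comp b c d f g) h
}.
Arguments hom {C} : rename.
Arguments comp {C a b c} : rename.
Arguments idm {C} : rename.

Notation "g ∘ f" := (comp g f) (at level 40, left associativity).

Record MonoidalCategory := {
  cat :> Category;
  tens : cat -> cat -> cat;
  tensm : forall a b c d : cat, hom a b -> hom c d -> hom (tens a c) (tens b d);
  munit : cat;
  assoc : forall a b c : cat, hom (tens (tens a b) c) (tens a (tens b c));
  assoc_inv : forall a b c : cat, hom (tens a (tens b c)) (tens (tens a b) c);
  lunit : forall a : cat, hom (tens munit a) a;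
  lunit_inv : forall a : cat, hom a (tens munit a);
  runit : forall a : cat, hom (tens a munit) a;
  runit_inv : forall a : cat, hom a (tens a munit);
  tensm_id : forall a c, tensm a a c c (idm a) (idm c) = idm (tens a c);
  tensm_comp : forall a b e c d g (f : hom a b) (f' : hom b e) (h : hom c d) (h' : hom d g),
      tensm a e c g (f' ∘ f) (h' ∘ h) = tensm b e d g f' h' ∘ tensm a b c d f h;
  assoc_iso1 : forall a b c, assoc_inv a b c ∘ assoc a b c = idm _;
  assoc_iso2 : forall a b c, assoc a b c ∘ assoc_inv a b c = idm _;
  lunit_iso1 : forall a, lunit_inv a ∘ lunit a = idm _;
  lunit_iso2 : forall a, lunit a ∘ lunit_inv a = idm _;
  runit_iso1 : forall a, runit_inv a ∘ runit a = idm _;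
  runit_iso2 : forall a, runit a ∘ runit_inv a = idm _;
  assoc_nat : forall a a' b b' c c' (f : hom a a') (g : hom b b') (h : hom c c'),
      assoc a' b' c' ∘ tensm _ _ _ _ (tensm _ _ _ _ f g) h
      = tensm _ _ _ _ f (tensm _ _ _ _ g h) ∘ assoc a b c;
  lunit_nat : forall a b (f : hom a b),
      lunit b ∘ tensm _ _ _ _ (idm munit) f = f ∘ lunit a;
  runit_nat : forall a b (f : hom a b),
      runit b ∘ tensm _ _ _ _ f (idm munit) = f ∘ runit a;
  pentagon : forall a b c d,
      tensm _ _ _ _ (idm a) (assoc b c d) ∘ assoc a (tens b c) d
        ∘ tensm _ _ _ _ (assoc a b c) (idm d)
      = assoc a b (tens c d) ∘ assoc (tens a b) c d;
  triangle : forall a b,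
      tensm _ _ _ _ (idm a) (lunit b) ∘ assoc a munit b
      = tensm _ _ _ _ (runit a) (idm b)
}.
Arguments tens {m} : rename.
Arguments tensm {m a b c d} : rename.

Definition ltens {M : MonoidalCategory} (E : M) {a b : M} (f : hom a b)
  : hom (tens E a) (tens E b) := tensm (idm E) f.
Definition rtens {M : MonoidalCategory} (E : M) {a b : M} (f : hom a b)
  : hom (tens a E) (tens b E) := tensm f (idm E).

Record Functor (J C : Category) := {
  fob :> J -> C;
  fmor : forall a b : J, hom a b -> hom (fob a) (fob b);
  fmor_id : forall a, fmor a a (idm a) = idm (fob a);
  fmor_comp : forall a b c (g : hom b c) (f : hom a b),
      fmor a c (g ∘ f) = fmor b c g ∘ fmor a b f
}.
Arguments fob {J C}.
Arguments fmor {J C} F {a b} : rename.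

Definition is_cone {J C : Category} (F : Functor J C) (L : C)
  (p : forall j : J, hom L (F j)) : Prop :=
  forall (a b : J) (u : hom a b), fmor F u ∘ p a = p b.

Definition is_limit {J C : Category} (F : Functor J C) (L : C)
  (p : forall j : J, hom L (F j)) : Prop :=
  is_cone F L p /\
  forall (X : C) (x : forall j : J, hom X (F j)), is_cone F X x ->
    exists h : hom X L, (forall j, p j ∘ h = x j) /\
      forall h' : hom X L, (forall j, p j ∘ h' = x j) -> h' = h.

Definition is_cocone {J C : Category} (F : Functor J C) (L : C)
  (c : forall j : J, hom (F j) L) : Prop :=
  forall (a b : J) (u : hom a b), c b ∘ fmor F u = c a.

Definition is_colimit {J C : Category} (F : Functor J C) (L : C)
  (c : forall j : J, hom (F j) L) : Prop :=
  is_cocone F L c /\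
  forall (X : C) (x : forall j : J, hom (F j) X), is_cocone F X x ->
    exists h : hom L X, (forall j, h ∘ c j = x j) /\
      forall h' : hom L X, (forall j, h' ∘ c j = x j) -> h' = h.

Definition finite_type (T : Type) : Prop := exists l : list T, forall x : T, In x l.
Definition countable_type (T : Type) : Prop :=
  exists f : T -> nat, forall x y, f x = f y -> x = y.

Definition finite_cat (J : Category) : Prop :=
  finite_type (ob J) /\ forall a b : J, finite_type (hom a b).
Definition countable_cat (J : Category) : Prop :=
  countable_type (ob J) /\ forall a b : J, countable_type (hom a b).

Definition has_finite_limits (C : Category) : Prop :=
  forall (J : Category), finite_cat J -> forall F : Functor J C,
    exists (L : C) (p : forall j, hom L (F j)), is_limit F L p.

Definition has_countable_colimits (C : Category) : Prop :=
  forall (J : Category), countable_cat J -> forall F : Functor J C,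
    exists (L : C) (c : forall j, hom (F j) L), is_colimit F L c.

Definition is_coequalizer {C : Category} {X Y Q : C} (f g : hom X Y) (q : hom Y Q) : Prop :=
  q ∘ f = q ∘ g /\
  forall (Z : C) (z : hom Y Z), z ∘ f = z ∘ g ->
    exists h : hom Q Z, h ∘ q = z /\ forall h' : hom Q Z, h' ∘ q = z -> h' = h.

Definition regular_epi {C : Category} {Y Q : C} (q : hom Y Q) : Prop :=
  exists (X : C) (f g : hom X Y), is_coequalizer f g q.

Definition reflexive_pair {C : Category} {X Y : C} (f g : hom X Y) : Prop :=
  exists s : hom Y X, f ∘ s = idm Y /\ g ∘ s = idm Y.

Definition is_pushout {C : Category} {B P P' D : C}
  (q : hom B P) (q' : hom B P') (r : hom P D) (r' : hom P' D) : Prop :=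
  r ∘ q = r' ∘ q' /\
  forall (Z : C) (z : hom P Z) (z' : hom P' Z), z ∘ q = z' ∘ q' ->
    exists h : hom D Z, (h ∘ r = z /\ h ∘ r' = z') /\
      forall h' : hom D Z, h' ∘ r = z /\ h' ∘ r' = z' -> h' = h.

Definition is_chain_colimit {C : Category} (X : nat -> C)
  (x : forall n, hom (X n) (X (S n))) (L : C) (c : forall n, hom (X n) L) : Prop :=
  (forall n, c (S n) ∘ x n = c n) /\
  forall (Z : C) (z : forall n, hom (X n) Z), (forall n, z (S n) ∘ x n = z n) ->
    exists h : hom L Z, (forall n, h ∘ c n = z n) /\
      forall h' : hom L Z, (forall n, h' ∘ c n = z n) -> h' = h.

Definition preserves_reflexive_coequalizers {C : Category}
  (Fo : C -> C) (Fm : forall a b : C, hom a b -> hom (Fo a) (Fo b)) : Prop :=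
  forall (X Y Q : C) (f g : hom X Y) (q : hom Y Q),
    reflexive_pair f g -> is_coequalizer f g q ->
    is_coequalizer (Fm _ _ f) (Fm _ _ g) (Fm _ _ q).

Definition preserves_chain_colimits {C : Category}
  (Fo : C -> C) (Fm : forall a b : C, hom a b -> hom (Fo a) (Fo b)) : Prop :=
  forall (X : nat -> C) (x : forall n, hom (X n) (X (S n))) (L : C)
         (c : forall n, hom (X n) L),
    is_chain_colimit X x L c ->
    is_chain_colimit (fun n => Fo (X n)) (fun n => Fm _ _ (x n)) (Fo L)
                     (fun n => Fm _ _ (c n)).

(* Main.v *)
Require Import Defs.
From Stdlib Require Import List Eqdep_dec Bool IndefiniteDescription.
Import ListNotations.

Definition PPhom (a b : bool) : Type :=
  match a, b with
  | false, false => unit | true, true => unit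
  | false, true => bool | true, false => Empty_set end.

Definition PPcomp (a b c : bool) : PPhom b c -> PPhom a b -> PPhom a c :=
  match a, b, c return PPhom b c -> PPhom a b -> PPhom a c with
  | false, false, false => fun _ _ => tt
  | false, false, true => fun g _ => g
  | false, true, true => fun _ f => f
  | true, true, true => fun _ _ => tt
  | false, true, false => fun g _ => match g with end
  | true, false, _ => fun _ f => match f with end
  | true, true, false => fun g _ => match g with end
  end.

Definition PPid (a : bool) : PPhom a a := match a with false => tt | true => tt end.

Definition PP : Category.
Proof.
  refine (Build_Category bool PPhom PPcomp PPid _ _ _).
  - intros [|] [|] f; simpl in *; try destruct f; reflexivity.
  - intros [|] [|] f; simpl in *; try destruct f; reflexivity.
  - intros [|] [|] [|] [|] f g h; simpl in *;
      try destruct f; try destruct g; try destruct h; reflexivity.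
Defined.

Lemma PP_countable : countable_cat PP.
Proof.
  split.
  - exists (fun b : bool => if b then 1 else 0). intros [|] [|]; simpl; congruence.
  - intros [|] [|]; simpl.
    + exists (fun _ => 0). intros [] []; reflexivity.
    + exists (fun _ => 0). intros [].
    + exists (fun b : bool => if b then 1 else 0). intros [|] [|]; simpl; congruence.
    + exists (fun _ => 0). intros [] []; reflexivity.
Qed.


Definition PPF {C : Category} {X Y : C} (f g : hom X Y) : Functor PP C.
Proof.
  refine (Build_Functor PP C (fun b : bool => if b then Y else X)
    (fun a b => match a, b return PPhom a b -> hom (if a then Y else X) (if b then Y else X) with
      | false, false => fun _ => idm X
      | true, true => fun _ => idm Y
      | false, true => fun e => if e then f else g
      | true, false => fun e => match e with end end) _ _).
  - intros [|]; reflexivity.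
  - intros [|] [|] [|] u v; simpl in *;
      try destruct u; try destruct v; simpl;
      rewrite ?comp_id_l, ?comp_id_r; reflexivity.
Defined.

Lemma coeq_ex (C : Category) (H : has_countable_colimits C) :
  forall (X Y : C) (f g : hom X Y), exists (Q : C) (u : hom Y Q), is_coequalizer f g u.
Proof.
  intros X Y f g.
  destruct (H PP PP_countable (PPF f g)) as [L [c [Hc Hu]]].
  exists L, (c true).
  assert (E1 : c true ∘ f = c false) by exact (Hc false true true).
  assert (E2 : c true ∘ g = c false) by exact (Hc false true false).
  split. { etransitivity; [exact E1|symmetry; exact E2]. }
  intros Z z Hz.
  set (x := fun j : bool => match j return hom (PPF f g j) Z with true => z | false => z ∘ f end).
  assert (Hx : is_cocone (PPF f g) Z x).
  { intros [|] [|] u; simpl in *; try destruct u; simpl; rewrite ?comp_id_r; auto. }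
  destruct (Hu Z x Hx) as [h [Hh1 Hh2]].
  exists h. split. { exact (Hh1 true). }
  intros h' Hh'. apply Hh2. intros [|]; simpl. exact Hh'.
  change (h' ∘ c false = z ∘ f). rewrite <- E1. rewrite comp_assoc. exact (f_equal (fun k => k ∘ f) Hh').
Qed.
Inductive cs := csL | csR | csM.
Definition cs_le (a b : cs) : bool :=
  match a, b with
  | csL, csL | csR, csR | csM, csM | csL, csM | csR, csM => true
  | _, _ => false end.

Lemma cs_trans a b c : cs_le b c = true -> cs_le a b = true -> cs_le a c = true.
Proof. destruct a, b, c; simpl; congruence. Qed.
Lemma cs_refl a : cs_le a a = true.
Proof. destruct a; reflexivity. Qed.

Lemma bool_uip (x y : bool) (p q : x = y) : p = q.
Proof. apply UIP_dec. exact bool_dec. Qed.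

Definition CS : Category.
Proof.
  refine (Build_Category cs (fun a b => cs_le a b = true)
    (fun a b c g f => cs_trans a b c g f) cs_refl _ _ _);
  intros; apply bool_uip.
Defined.

Lemma CS_finite : finite_cat CS.
Proof.
  split.
  - exists [csL; csR; csM]. intros []; simpl; tauto.
  - intros a b. simpl. destruct (bool_dec (cs_le a b) true) as [e|n].
    + exists [e]. intros x. left. apply bool_uip.
    + exists []. intros x. contradiction.
Qed.

Definition CSF {C : Category} {X Y Z : C} (f : hom X Z) (g : hom Y Z) : Functor CS C.
Proof.
  refine (Build_Functor CS C
    (fun j => match j with csL => X | csR => Y | csM => Z end)
    (fun a b => match a, b return cs_le a b = true ->
         hom (match a with csL => X | csR => Y | csM => Z end)
             (match b with csL => X | csR => Y | csM => Z end) with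
      | csL, csL => fun _ => idm X
      | csR, csR => fun _ => idm Y
      | csM, csM => fun _ => idm Z
      | csL, csM => fun _ => f
      | csR, csM => fun _ => g
      | csL, csR => fun p => False_rect _ (diff_false_true p)
      | csR, csL => fun p => False_rect _ (diff_false_true p)
      | csM, csL => fun p => False_rect _ (diff_false_true p)
      | csM, csR => fun p => False_rect _ (diff_false_true p) end) _ _).
  - intros []; reflexivity.
  - intros [] [] [] u v; simpl in *; try discriminate; rewrite ?comp_id_l, ?comp_id_r; reflexivity.
Defined.

Lemma pb_ex (C : Category) (H : has_finite_limits C) :
  forall (X Y Z : C) (f : hom X Z) (g : hom Y Z), exists (P : C) (p1 : hom P X) (p2 : hom P Y),
    f ∘ p1 = g ∘ p2 /\ forall (W : C) (w1 : hom W X) (w2 : hom W Y), f ∘ w1 = g ∘ w2 ->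
      exists h : hom W P, p1 ∘ h = w1 /\ p2 ∘ h = w2.
Proof.
  intros X Y Z f g.
  destruct (H CS CS_finite (CSF f g)) as [P [p [Hp Hu]]].
  exists P, (p csL), (p csR).
  assert (E1 : f ∘ p csL = p csM) by exact (Hp csL csM eq_refl).
  assert (E2 : g ∘ p csR = p csM) by exact (Hp csR csM eq_refl).
  split. { etransitivity; [exact E1|symmetry; exact E2]. }
  intros W w1 w2 Hw.
  set (x := fun j : cs => match j return hom W (CSF f g j) with csL => w1 | csR => w2 | csM => f ∘ w1 end).
  assert (Hx : is_cone (CSF f g) W x).
  { intros [] [] u; simpl in *; try discriminate; rewrite ?comp_id_l; auto. }
  destruct (Hu W x Hx) as [h [Hh1 _]].
  exists h. split; [exact (Hh1 csL) | exact (Hh1 csR)].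
Qed.

Definition is_pb {C : Category} {X Y Z P : C} (f : hom X Z) (g : hom Y Z)
  (p1 : hom P X) (p2 : hom P Y) : Prop :=
  f ∘ p1 = g ∘ p2 /\ forall (W : C) (w1 : hom W X) (w2 : hom W Y), f ∘ w1 = g ∘ w2 ->
      exists h : hom W P, p1 ∘ h = w1 /\ p2 ∘ h = w2.

Definition PBS (C : Category) := forall (X Y Z : C) (f : hom X Z) (g : hom Y Z),
  {P : C & {p1 : hom P X & {p2 : hom P Y | is_pb f g p1 p2}}}.

Lemma pbs_of (C : Category) (H : has_finite_limits C) : PBS C.
Proof.
  intros X Y Z f g.
  destruct (constructive_indefinite_description _ (pb_ex C H X Y Z f g)) as [P HP].
  exists P.
  destruct (constructive_indefinite_description _ HP) as [p1 HP'].
  exists p1.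
  destruct (constructive_indefinite_description _ HP') as [p2 HP''].
  exists p2. exact HP''.
Qed.

Fixpoint Tn (C : Category) (pbs : PBS C) (B Pd : C) (al be : hom Pd B) (n : nat)
  : {T : C & (hom T B * hom T B)%type} :=
  match n with
  | O => existT _ B (idm B, idm B)
  | S m => let t := Tn C pbs B Pd al be m in
           let s := pbs _ _ _ (snd (projT2 t)) al in
           existT _ (projT1 s) (fst (projT2 t) ∘ projT1 (projT2 s), be ∘ proj1_sig (projT2 (projT2 s)))
  end.

Lemma T_step (C : Category) (pbs : PBS C) (B Pd : C) (al be : hom Pd B) (n : nat) :
  exists (p1 : hom (projT1 (Tn C pbs B Pd al be (S n))) (projT1 (Tn C pbs B Pd al be n)))
         (p2 : hom (projT1 (Tn C pbs B Pd al be (S n))) Pd),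
    is_pb (snd (projT2 (Tn C pbs B Pd al be n))) al p1 p2 /\
    fst (projT2 (Tn C pbs B Pd al be (S n))) = fst (projT2 (Tn C pbs B Pd al be n)) ∘ p1 /\
    snd (projT2 (Tn C pbs B Pd al be (S n))) = be ∘ p2.
Proof.
  simpl. destruct (pbs _ _ _ _ al) as [Pn [p1 [p2 Hpb]]]. simpl.
  exists p1, p2. auto.
Qed.
Definition FunLike {C : Category} (Fo : C -> C) (Fm : forall a b : C, hom a b -> hom (Fo a) (Fo b)) :=
  forall a b c (g : hom b c) (f : hom a b), Fm a c (g ∘ f) = Fm b c g ∘ Fm a b f.

Lemma wpre {C : Category} Fo Fm (Fc : @FunLike C Fo Fm) {A B0 A' Z : C} (w : hom (Fo B0) Z)
  (x y : hom A B0) (t : hom A' A) :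
  w ∘ Fm _ _ x = w ∘ Fm _ _ y -> w ∘ Fm _ _ (x ∘ t) = w ∘ Fm _ _ (y ∘ t).
Proof. intros H. rewrite !Fc, !comp_assoc, H. reflexivity. Qed.


Lemma T_coeq (C : Category) (pbs : PBS C) (B Pd : C) (al be : hom Pd B)
  Fo Fm (Fc : @FunLike C Fo Fm) (Z : C) (w : hom (Fo B) Z) :
  w ∘ Fm _ _ al = w ∘ Fm _ _ be ->
  forall n, w ∘ Fm _ _ (fst (projT2 (Tn C pbs B Pd al be n))) = w ∘ Fm _ _ (snd (projT2 (Tn C pbs B Pd al be n))).
Proof.
  intros H n. induction n as [|n IH]. { reflexivity. }
  destruct (T_step C pbs B Pd al be n) as [p1 [p2 [[Hc _] [E1 E2]]]].
  rewrite E1, E2. rewrite (wpre Fo Fm Fc w _ _ p1 IH), Hc.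
  apply (wpre Fo Fm Fc w _ _ p2 H).
Qed.

Lemma T_refl (C : Category) (pbs : PBS C) (B Pd : C) (al be : hom Pd B) (sP : hom B Pd)
  (H1 : al ∘ sP = idm B) (H2 : be ∘ sP = idm B) :
  forall n, exists s : hom B (projT1 (Tn C pbs B Pd al be n)),
    fst (projT2 (Tn C pbs B Pd al be n)) ∘ s = idm B /\ snd (projT2 (Tn C pbs B Pd al be n)) ∘ s = idm B.
Proof.
  intros n. induction n as [|n IH].
  { exists (idm B). simpl. split; apply comp_id_l. }
  destruct IH as [s [Hs1 Hs2]].
  destruct (T_step C pbs B Pd al be n) as [p1 [p2 [[Hc Hu] [E1 E2]]]].
  destruct (Hu B s sP) as [h [Hh1 Hh2]]. { rewrite Hs2, H1. reflexivity. }
  exists h. rewrite E1, E2, <- !comp_assoc, Hh1, Hh2. auto.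
Qed.

Lemma T_emb (C : Category) (pbs : PBS C) (B Pd : C) (al be : hom Pd B) (sP : hom B Pd)
  (H1 : al ∘ sP = idm B) (H2 : be ∘ sP = idm B) :
  forall n, exists e : hom (projT1 (Tn C pbs B Pd al be n)) (projT1 (Tn C pbs B Pd al be (S n))),
    fst (projT2 (Tn C pbs B Pd al be (S n))) ∘ e = fst (projT2 (Tn C pbs B Pd al be n)) /\
    snd (projT2 (Tn C pbs B Pd al be (S n))) ∘ e = snd (projT2 (Tn C pbs B Pd al be n)).
Proof.
  intros n.
  destruct (T_step C pbs B Pd al be n) as [p1 [p2 [[Hc Hu] [E1 E2]]]].
  destruct (Hu _ (idm _) (sP ∘ snd (projT2 (Tn C pbs B Pd al be n)))) as [h [Hh1 Hh2]].
  { rewrite comp_id_r, comp_assoc, H1, comp_id_l. reflexivity. }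
  exists h. rewrite E1, E2, <- !comp_assoc, Hh1, Hh2, comp_assoc, H2, comp_id_l, comp_id_r. auto.
Qed.

Lemma coeq_epi {C : Category} {X Y Q Z : C} (f g : hom X Y) (q : hom Y Q) (h1 h2 : hom Q Z) :
  is_coequalizer f g q -> h1 ∘ q = h2 ∘ q -> h1 = h2.
Proof.
  intros [Hq Hu] E.
  destruct (Hu Z (h1 ∘ q)) as [h [_ Hh]].
  { rewrite <- !comp_assoc, Hq. reflexivity. }
  rewrite (Hh h1 eq_refl), (Hh h2 (eq_sym E)). reflexivity.
Qed.

Lemma kernel_pair (C : Category) (pbs : PBS C) {B Q : C} (q : hom B Q) :
  regular_epi q -> exists (K : C) (k1 k2 : hom K B) (s : hom B K),
    k1 ∘ s = idm B /\ k2 ∘ s = idm B /\ is_coequalizer k1 k2 q.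
Proof.
  intros [X [f [g [Hfg Hu]]]].
  destruct (pbs _ _ _ q q) as [K [k1 [k2 [Hc Hpu]]]].
  destruct (Hpu B (idm B) (idm B) eq_refl) as [s [Hs1 Hs2]].
  exists K, k1, k2, s. split; [|split]; auto.
  split; auto.
  intros Z z Hz.
  destruct (Hpu X f g Hfg) as [t [Ht1 Ht2]].
  apply Hu. rewrite <- Ht1, <- Ht2, !comp_assoc, Hz. reflexivity.
Qed.
Theorem lemma1 (M : MonoidalCategory)
  (Hlim : has_finite_limits M)
  (Hcolim : has_countable_colimits M)
  (Hrefl : forall E : M,
      preserves_reflexive_coequalizers (fun a => tens a E) (fun a b f => rtens E f) /\
      preserves_reflexive_coequalizers (fun a => tens E a) (fun a b f => ltens E f))
  (Hchain : forall E : M,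
      preserves_chain_colimits (fun a => tens a E) (fun a b f => rtens E f) /\
      preserves_chain_colimits (fun a => tens E a) (fun a b f => ltens E f))
  (B C C' D : M) (q : hom B C) (q' : hom B C') (r : hom C D) (r' : hom C' D)
  (Hq : regular_epi q) (Hq' : regular_epi q')
  (Hpo : is_pushout q q' r r') :
  forall E : M,
    is_pushout (ltens E q) (ltens E q') (ltens E r) (ltens E r') /\
    is_pushout (rtens E q) (rtens E q') (rtens E r) (rtens E r').
Proof.
  pose (pbs := pbs_of M Hlim).
  destruct (kernel_pair M pbs q Hq) as [K [k1 [k2 [s [Hs1 [Hs2 Hqc]]]]]].
  destruct (kernel_pair M pbs q' Hq') as [K' [k1' [k2' [s' [Hs1' [Hs2' Hqc']]]]]].
  destruct (pbs _ _ _ k2 k1') as [P [pi1 [pi2 [Hpc Hpu]]]].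
  pose (al := k1 ∘ pi1). pose (be := k2' ∘ pi2).
  destruct (Hpu B s s') as [sP [HsP1 HsP2]]. { rewrite Hs2, Hs1'. reflexivity. }
  assert (Hal : al ∘ sP = idm B). { unfold al. rewrite <- comp_assoc, HsP1, Hs1. reflexivity. }
  assert (Hbe : be ∘ sP = idm B). { unfold be. rewrite <- comp_assoc, HsP2, Hs2'. reflexivity. }
  assert (HPco : forall Fo Fm (Fc : @FunLike M Fo Fm) (Z : M) (w : hom (Fo B) Z),
    w ∘ Fm _ _ k1 = w ∘ Fm _ _ k2 -> w ∘ Fm _ _ k1' = w ∘ Fm _ _ k2' ->
    w ∘ Fm _ _ al = w ∘ Fm _ _ be).
  { intros Fo Fm Fc Z w H1 H2. unfold al, be.
    rewrite (wpre Fo Fm Fc w _ _ pi1 H1), Hpc. apply (wpre Fo Fm Fc w _ _ pi2 H2). }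
  pose (T := fun n => Tn M pbs B P al be n).
  pose (ta := fun n => fst (projT2 (T n))).
  pose (tb := fun n => snd (projT2 (T n))).
  assert (cqs : forall n, {Q : M & {u : hom B Q | is_coequalizer (ta n) (tb n) u}}).
  { intros n. destruct (constructive_indefinite_description _ (coeq_ex M Hcolim _ _ (ta n) (tb n))) as [Q HQ].
    exists Q. apply constructive_indefinite_description. exact HQ. }
  pose (Qn := fun n => projT1 (cqs n)).
  pose (u := fun n => proj1_sig (projT2 (cqs n)) : hom B (Qn n)).
  assert (Hu : forall n, is_coequalizer (ta n) (tb n) (u n)).
  { intros n. exact (proj2_sig (projT2 (cqs n))). }
  assert (xs : forall n, {x : hom (Qn n) (Qn (S n)) | x ∘ u n = u (S n)}).
  { intros n. apply constructive_indefinite_description.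
    destruct (Hu n) as [_ Hun].
    destruct (T_emb M pbs B P al be sP Hal Hbe n) as [e [He1 He2]].
    destruct (Hun _ (u (S n))) as [x [Hx _]].
    { assert (He1' : ta (S n) ∘ e = ta n) by exact He1.
      assert (He2' : tb (S n) ∘ e = tb n) by exact He2.
      rewrite <- He1', <- He2', !comp_assoc, (proj1 (Hu (S n))). reflexivity. }
    exists x; exact Hx. }
  pose (x := fun n => proj1_sig (xs n)).
  assert (Hx : forall n, x n ∘ u n = u (S n)). { intros n. exact (proj2_sig (xs n)). }
  assert (FLid : @FunLike M (fun a => a) (fun a b f => f)). { intros a b c g f. reflexivity. }
  assert (Hrq1 : (r ∘ q) ∘ k1 = (r ∘ q) ∘ k2).
  { rewrite <- !comp_assoc, (proj1 Hqc). reflexivity. }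
  assert (Hrq2 : (r ∘ q) ∘ k1' = (r ∘ q) ∘ k2').
  { rewrite (proj1 Hpo), <- !comp_assoc, (proj1 Hqc'). reflexivity. }
  assert (ds : forall n, {d : hom (Qn n) D | d ∘ u n = r ∘ q}).
  { intros n. apply constructive_indefinite_description.
    destruct (proj2 (Hu n) D (r ∘ q)) as [d [Hd _]].
    { exact (T_coeq M pbs B P al be _ _ FLid D (r ∘ q)
               (HPco _ _ FLid D (r ∘ q) Hrq1 Hrq2) n). }
    exists d; exact Hd. }
  pose (d := fun n => proj1_sig (ds n)).
  assert (Hd : forall n, d n ∘ u n = r ∘ q). { intros n. exact (proj2_sig (ds n)). }
  assert (HT1 : forall (Z : M) (w : hom B Z), w ∘ ta 1 = w ∘ tb 1 ->
      w ∘ k1 = w ∘ k2 /\ w ∘ k1' = w ∘ k2').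
  { intros Z w Hw.
    destruct (T_step M pbs B P al be 0) as [p1 [p2 [[Hc Hpu1] [E1 E2]]]].
    assert (E1' : ta 1 = idm B ∘ p1) by exact E1.
    assert (E2' : tb 1 = be ∘ p2) by exact E2.
    rewrite E1', E2', comp_id_l in Hw.
    destruct (Hpu K (idm K) (s' ∘ k2)) as [jK [HjK1 HjK2]].
    { rewrite comp_id_r, comp_assoc, Hs1', comp_id_l. reflexivity. }
    destruct (Hpu K' (s ∘ k1') (idm K')) as [jK' [HjK1' HjK2']].
    { rewrite comp_id_r, comp_assoc, Hs2, comp_id_l. reflexivity. }
    split.
    - destruct (Hpu1 K k1 jK) as [t [Ht1 Ht2]].
      { change (idm B ∘ k1 = al ∘ jK). unfold al. rewrite <- comp_assoc, HjK1, comp_id_r, comp_id_l. reflexivity. }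
      rewrite <- Ht1, comp_assoc. transitivity (w ∘ (be ∘ p2) ∘ t). { exact (f_equal (fun k => k ∘ t) Hw). } rewrite <- !comp_assoc, Ht2. unfold be.
      f_equal. rewrite <- comp_assoc, HjK2, comp_assoc, Hs2', comp_id_l. reflexivity.
    - destruct (Hpu1 K' k1' jK') as [t [Ht1 Ht2]].
      { change (idm B ∘ k1' = al ∘ jK'). unfold al. rewrite <- comp_assoc, HjK1', comp_assoc, Hs1. reflexivity. }
      rewrite <- Ht1, comp_assoc. transitivity (w ∘ (be ∘ p2) ∘ t). { exact (f_equal (fun k => k ∘ t) Hw). } rewrite <- !comp_assoc, Ht2. unfold be.
      f_equal. rewrite <- comp_assoc, HjK2', comp_id_r. reflexivity. }
  assert (HD : is_chain_colimit Qn x D d).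
  { split.
    - intros n. apply (coeq_epi _ _ _ _ _ (Hu n)).
      rewrite <- comp_assoc, Hx, !Hd. reflexivity.
    - intros Z z Hz.
      pose (w := z 0 ∘ u 0).
      assert (Hzw : forall n, z n ∘ u n = w).
      { induction n as [|n IH]. { reflexivity. }
        rewrite <- IH, <- (Hz n), <- comp_assoc, Hx. reflexivity. }
      assert (Hw1 : w ∘ ta 1 = w ∘ tb 1).
      { rewrite <- (Hzw 1), <- !comp_assoc, (proj1 (Hu 1)). reflexivity. }
      destruct (HT1 Z w Hw1) as [HK HK'].
      destruct (proj2 Hqc Z w HK) as [v [Hv _]].
      destruct (proj2 Hqc' Z w HK') as [v' [Hv' _]].
      destruct (proj2 Hpo Z v v') as [h [[Hh1 Hh2] Hhu]].
      { rewrite Hv, Hv'. reflexivity. }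
      exists h. split.
      + intros n. apply (coeq_epi _ _ _ _ _ (Hu n)).
        rewrite <- comp_assoc, Hd, comp_assoc, Hh1, Hv, Hzw. reflexivity.
      + intros h' Hh'. apply Hhu.
        assert (E0 : h' ∘ r ∘ q = w).
        { rewrite <- comp_assoc, <- (Hd 0), comp_assoc, Hh'. reflexivity. }
        split.
        * apply (coeq_epi _ _ _ _ _ Hqc). rewrite E0, Hv. reflexivity.
        * apply (coeq_epi _ _ _ _ _ Hqc'). rewrite <- comp_assoc, <- (proj1 Hpo), comp_assoc, E0, Hv'. reflexivity. }
  assert (gen : forall Fo Fm, @FunLike M Fo Fm -> preserves_reflexive_coequalizers Fo Fm ->
      preserves_chain_colimits Fo Fm ->
      is_pushout (Fm _ _ q) (Fm _ _ q') (Fm _ _ r) (Fm _ _ r')).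
  { intros Fo Fm Fc Fr Fch.
    assert (FHq : is_coequalizer (Fm _ _ k1) (Fm _ _ k2) (Fm _ _ q)).
    { apply Fr; [exists s; auto | exact Hqc]. }
    assert (FHq' : is_coequalizer (Fm _ _ k1') (Fm _ _ k2') (Fm _ _ q')).
    { apply Fr; [exists s'; auto | exact Hqc']. }
    assert (FHu : forall n, is_coequalizer (Fm _ _ (ta n)) (Fm _ _ (tb n)) (Fm _ _ (u n))).
    { intros n. apply Fr; [|exact (Hu n)].
      destruct (T_refl M pbs B P al be sP Hal Hbe n) as [sn Hsn]. exists sn. exact Hsn. }
    pose proof (Fch _ _ _ _ HD) as FHD.
    split.
    { rewrite <- !Fc, (proj1 Hpo). reflexivity. }
    intros Z z z' Hz.
    pose (w := z ∘ Fm _ _ q).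
    assert (Hw1 : w ∘ Fm _ _ k1 = w ∘ Fm _ _ k2).
    { unfold w. rewrite <- !comp_assoc, (proj1 FHq). reflexivity. }
    assert (Hw2 : w ∘ Fm _ _ k1' = w ∘ Fm _ _ k2').
    { unfold w. rewrite Hz, <- !comp_assoc, (proj1 FHq'). reflexivity. }
    pose proof (T_coeq M pbs B P al be Fo Fm Fc Z w (HPco Fo Fm Fc Z w Hw1 Hw2)) as Hwn.
    assert (zs : forall n, {zn : hom (Fo (Qn n)) Z | zn ∘ Fm _ _ (u n) = w}).
    { intros n. apply constructive_indefinite_description.
      destruct (proj2 (FHu n) Z w (Hwn n)) as [zn [Hzn _]]. exists zn. exact Hzn. }
    pose (zn := fun n => proj1_sig (zs n)).
    assert (Hzn : forall n, zn n ∘ Fm _ _ (u n) = w). { intros n. exact (proj2_sig (zs n)). }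
    assert (Hcomp : forall n, zn (S n) ∘ Fm _ _ (x n) = zn n).
    { intros n. apply (coeq_epi _ _ _ _ _ (FHu n)).
      rewrite <- comp_assoc, <- Fc, Hx, !Hzn. reflexivity. }
    destruct (proj2 FHD Z zn Hcomp) as [h [Hh Hhu]].
    assert (Key : h ∘ Fm _ _ r ∘ Fm _ _ q = w).
    { rewrite <- comp_assoc, <- Fc, <- (Hd 0), Fc, comp_assoc, Hh. apply Hzn. }
    exists h. split; [split|].
    - apply (coeq_epi _ _ _ _ _ FHq). rewrite Key. reflexivity.
    - apply (coeq_epi _ _ _ _ _ FHq'). rewrite <- Hz.
      rewrite <- comp_assoc, <- Fc, <- (proj1 Hpo), Fc, comp_assoc, Key. reflexivity.
    - intros h' [H1 H2]. apply Hhu. intros n.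
      apply (coeq_epi _ _ _ _ _ (FHu n)).
      rewrite Hzn, <- comp_assoc, <- Fc, Hd, Fc, comp_assoc, H1. reflexivity. }
  intros E. split.
  - apply (gen (fun a => tens E a) (fun a b f => ltens E f)).
    + intros a b c g f. unfold ltens. rewrite <- tensm_comp, comp_id_l. reflexivity.
    + exact (proj2 (Hrefl E)).
    + exact (proj2 (Hchain E)).
  - apply (gen (fun a => tens a E) (fun a b f => rtens E f)).
    + intros a b c g f. unfold rtens. rewrite <- tensm_comp, comp_id_l. reflexivity.
    + exact (proj1 (Hrefl E)).
    + exact (proj1 (Hchain E)).
Qed.
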